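(* Let $\Gamma=\Lambda\times\Gamma_t$ be a finitely generated abelian group ($\Lambda$ free of rank $n$, $\Gamma_t$ finite), $T=\mathrm{Hom}(\Gamma,\mathbb{C}^* )$, and $X$ a finite list of nonzero elements of $\Lambda$ spanning a sublattice of finite index in $\Lambda$. For every $C\in\mathcal{C}(X)$, with $\mathcal{D}(C)=\{A\subseteq X: C\text{ is a connected component of }H_A\}$, $$\mu(T_C,C)=\sum_{A\in\mathcal{D}(C)}(-1)^{|A|}.$$
   Context: Each $\chi\in\Lambda$ gives a character $t\mapsto t(\chi)$ of $T$, with kernel $H_\chi=\{t\in T:t(\chi)=1\}$. For $A\subseteq X$, $H_A=\bigcap_{\chi\in A}H_\chi$ (with $H_\emptyset=T$). $\mathcal{C}(X)$ is the set of all connected components of all the sets $H_A$, $A\subseteq X$ (the layers), partially ordered by reverse inclusion; its minimal elements are the connected components of $T$. $\mu$ is the Möbius function of the poset $\mathcal{C}(X)$: $\mu(L,L)=1$, $\mu(L,M)=-\sum_{L\le N<M}\mu(L,N)$ for $L<M$, and $\mu(L,M)=0$ otherwise. For $C\in\mathcal{C}(X)$, $T_C$ is the connected component of $T$ containing $C$. *)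

(* Defs.v *)
From HB Require Import structures.
From mathcomp Require Import all_boot all_order all_algebra.
From mathcomp Require Import all_classical all_reals all_analysis.
From mathcomp.real_closed Require Import complex.
Unset Printing Implicit Defensive.
Import Order.TTheory GRing.Theory Num.Theory numFieldNormedType.Exports.
Local Open Scope classical_set_scope.
Local Open Scope ring_scope.

Definition Gam (n : nat) (Gt : finZmodType) : zmodType :=
  ('rV[int]_n * Gt)%type.

(* The ambient space of all functions Gamma -> C (C = R[i], R a realType),
   with the topology of pointwise convergence, C being topologised as R^2
   through z |-> (Re z, Im z). *)
Definition Amb (R : realType) (n : nat) (Gt : finZmodType) :=
  initial_topology
    (fun t : Gam n Gt -> R[i] =>
       ((fun g => (complex.Re (t g), complex.Im (t g))) : {ptws Gam n Gt -> (R * R)%type})).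

Definition Tset (R : realType) (n : nat) (Gt : finZmodType) : set (Amb R n Gt) :=
  [set t : Amb R n Gt | (forall a b : Gam n Gt, t (a + b) = t a * t b)
                        /\ (forall a : Gam n Gt, t a != 0)].

Definition chiL (n : nat) (Gt : finZmodType) (chi : 'rV[int]_n) : Gam n Gt :=
  (chi, 0).

Definition HA (R : realType) (n : nat) (Gt : finZmodType) (m : nat)
  (X : 'I_m -> 'rV[int]_n) (A : {set 'I_m}) : set (Amb R n Gt) :=
  [set t | Tset R n Gt t /\ (forall i, i \in A -> t (chiL n Gt (X i)) = 1)].

Definition is_comp_of (R : realType) (n : nat) (Gt : finZmodType) (m : nat)
  (X : 'I_m -> 'rV[int]_n) (A : {set 'I_m}) (C : set (Amb R n Gt)) : Prop :=
  exists x, HA R n Gt m X A x /\ C = connected_component (HA R n Gt m X A) x.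

Definition is_layer (R : realType) (n : nat) (Gt : finZmodType) (m : nat)
  (X : 'I_m -> 'rV[int]_n) (C : set (Amb R n Gt)) : Prop :=
  exists A : {set 'I_m}, is_comp_of R n Gt m X A C.

Definition finite_index (n m : nat) (X : 'I_m -> 'rV[int]_n) : Prop :=
  exists reps : seq 'rV[int]_n, forall lam : 'rV[int]_n,
    exists2 r, r \in reps & exists c : 'I_m -> int, lam - r = \sum_i X i *~ c i.

Definition is_mobius (U : choiceType) (P : set U) (le : U -> U -> Prop)
  (mu : U -> U -> int) : Prop :=
  [/\ (forall L, P L -> mu L L = 1),
      (forall L M, P L -> P M -> le L M -> L <> M ->
         mu L M = - \sum_(N \in [set N | P N /\ le L N /\ le N M /\ N <> M]) mu L N)
    & (forall L M, P L -> P M -> ~ le L M -> mu L M = 0)].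

Definition mobius (U : choiceType) (P : set U) (le : U -> U -> Prop) : U -> U -> int :=
  xget (fun _ _ => 0) [set mu | is_mobius U P le mu].

Definition rev_incl (U : Type) (L M : set U) : Prop := M `<=` L.

(* Main.v *)
Require Import Defs.
From HB Require Import structures.
From mathcomp Require Import all_boot all_order all_algebra.
From mathcomp Require Import all_classical all_reals all_analysis.
From mathcomp.real_closed Require Import complex.
From mathcomp Require Import ring lra.
Import Order.TTheory GRing.Theory Num.Theory numFieldNormedType.Exports.
Local Open Scope classical_set_scope.
Local Open Scope ring_scope.

Lemma cont_ptws (X : topologicalType) (I : Type) (V : topologicalType)
  (h : X -> {ptws I -> V}) : (forall i, continuous (fun x => h x i)) -> continuous h.
Proof.
move=> hc x; apply/cvg_sup => i.
exact: (@continuous_comp_initial _ _ _ (fun f : I -> V => f i) h (hc i) x).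
Qed.

Section Path.
Variables (R : realType) (n : nat) (Gt : finZmodType).

Definition gam (x : Amb R n Gt) (j : 'I_n) (s : R) : Amb R n Gt :=
  fun g => x g * ((expR (s * (g.1 ord0 j)%:~R))%:C)%C.

Lemma gam_cont x j : continuous (gam x j).
Proof.
apply: continuous_comp_initial; apply: cont_ptws => g /=.
have E : forall s, (fun g => (complex.Re (gam x j s g), complex.Im (gam x j s g))) g
   = (complex.Re (x g) * expR (s * (g.1 ord0 j)%:~R),
      complex.Im (x g) * expR (s * (g.1 ord0 j)%:~R)).
  move=> s; rewrite /gam; case: (x g) => a b /=; congr (_, _); simpl; ring.
move=> s; rewrite /comp.
have -> : (fun x0 : R => (complex.Re (gam x j x0 g), complex.Im (gam x j x0 g))) =
  (fun x0 => (complex.Re (x g) * expR (x0 * (g.1 ord0 j)%:~R),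
     complex.Im (x g) * expR (x0 * (g.1 ord0 j)%:~R))) by apply: funext.
have ce : continuous (fun x0 : R => expR (x0 * (g.1 ord0 j)%:~R)).
  move=> y; apply: (continuous_comp (f := fun x0 : R => x0 * (g.1 ord0 j)%:~R)).
    by apply: cvgMl; exact: cvg_id.
  exact: continuous_expR.
have h1 : forall a : R, (fun x0 : R => a * expR (x0 * (g.1 ord0 j)%:~R)) @ s -->
   a * expR (s * (g.1 ord0 j)%:~R).
  by move=> a; apply: cvgM; [exact: cvg_cst|exact: ce].
exact: (cvg_pair (h1 _) (h1 _)).
Qed.

Lemma gam0 x j : gam x j 0 = x.
Proof. by apply: funext => g; rewrite /gam mul0r expR0 mulr1. Qed.

Lemma gam_T x j s : Tset R n Gt x -> Tset R n Gt (gam x j s).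
Proof.
move=> [xM xN]; split.
  move=> a b; rewrite /gam xM.
  have -> : ((a + b).1 ord0 j)%:~R = (a.1 ord0 j)%:~R + (b.1 ord0 j)%:~R :> R.
    by rewrite /= mxE intrD.
  rewrite mulrDr expRD rmorphM /=.
  by rewrite -!mulrA; congr (_ * _); rewrite mulrCA.
move=> a; rewrite /gam mulf_neq0 //.
by apply/negP => /eqP /complexI /eqP; rewrite expR_eq0.
Qed.

Lemma gam_comp x j s : Tset R n Gt x ->
  connected_component (Tset R n Gt) x (gam x j s).
Proof.
move=> Tx; apply: (@connected_component_max _ _ (gam x j @` setT)).
- by exists 0 => //; rewrite gam0.
- by move=> _ [t _ <-]; exact: gam_T.
- apply: connected_continuous_connected.
    apply/connected_intervalP; rewrite -set_itv_infty_infty.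
    exact: interval_is_interval.
  apply: continuous_subspaceT; exact: gam_cont.
- by exists s.
Qed.

Lemma nonconst x (chi : 'rV[int]_n) : Tset R n Gt x -> chi != 0 ->
  exists t, connected_component (Tset R n Gt) x t /\ t (chiL n Gt chi) != 1.
Proof.
move=> Tx chi0.
have [j chij] : exists j, chi ord0 j != 0.
  apply: contrapT => H; move/eqP: chi0; apply; apply/rowP => j; rewrite mxE.
  by apply/eqP; apply/negPn/negP => h; apply: H; exists j.
have [x1|x1] := eqVneq (x (chiL n Gt chi)) 1; last first.
  by exists x; split => //; exact: connected_component_refl.
exists (gam x j 1); split; first exact: gam_comp.
rewrite /gam x1 mul1r mul1r /=; apply/negP => /eqP.
move=> /(congr1 (@complex.Re R)) /= /eqP.
rewrite -[X in _ == X]expR0 (inj_eq (@expR_inj R)) intr_eq0.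
by apply/negP.
Qed.
End Path.
Lemma alt_sum (m : nat) (D : {set 'I_m}) (d : 'I_m) : d \in D ->
  \sum_(B : {set 'I_m} | B \subset D) (-1) ^+ #|B| = 0 :> int.
Proof.
move=> dD.
pose phi (B : {set 'I_m}) := if d \in B then B :\ d else d |: B.
have phiK : involutive phi.
  move=> B; rewrite /phi; have [dB|dB] := boolP (d \in B).
    by rewrite in_setD1 eqxx /= finset.setD1K.
  by rewrite in_setU1 eqxx /= finset.setU1K.
set S := (X in X = _).
have : S = - S.
  rewrite {1}/S (reindex_inj (inv_inj phiK)) /S -sumrN; apply: eq_big => B.
    rewrite /phi; case: ifP => dB.
      apply/idP/idP => H; last exact: fintype.subset_trans (finset.subD1set _ _) H.
      by rewrite -(finset.setD1K dB) finset.subUset finset.sub1set dD H.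
    by rewrite finset.subUset finset.sub1set dD.
  move=> _; rewrite /phi; case: ifP => dB.
    by rewrite [in RHS](cardsD1 d) dB exprS mulN1r opprK.
  by rewrite cardsU1 dB exprS mulN1r.
move/eqP; rewrite -subr_eq0 opprK -mulr2n mulrn_eq0 /=.
by move/eqP.
Qed.

Lemma fsbig_fin (T : finType) (A : {set T}) (F : T -> int) :
  \sum_(x \in [set x | x \in A]) F x = \sum_(x in A) F x.
Proof.
rewrite -(@bigfs _ _ _ _ (index_enum T) (fun x => x \in A) F (index_enum_uniq T)) //.
by move=> i _; rewrite mem_index_enum.
Qed.

Section Comb.
Variables (R : realType) (n : nat) (Gt : finZmodType) (m : nat) (X : 'I_m -> 'rV[int]_n).
Local Notation U := (set (Amb R n Gt)).
Local Notation HAs := (HA R n Gt m X).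
Local Notation layer := (is_layer R n Gt m X).
Local Notation icomp := (is_comp_of R n Gt m X).
Local Notation TT := (Tset R n Gt).
Definition comp A (y : Amb R n Gt) : U := connected_component (HAs A) y.
Definition AS (S : U) : {set 'I_m} :=
  [set i | `[< forall t, S t -> t (chiL n Gt (X i)) = 1 >] ]%SET.

Lemma HA_anti {A B : {set 'I_m}} : (A \subset B) -> HAs B `<=` HAs A.
Proof. by move=> AB t [Tt Ht]; split => // i iA; apply: Ht; exact: (fintype.subsetP AB).
Qed.
Lemma HA_T {A : {set 'I_m}} : HAs A `<=` TT. Proof. by move=> t []. Qed.
Lemma sub_HA_AS {S} : S `<=` TT -> S `<=` HAs (AS S).
Proof. by move=> ST t St; split; [exact: ST|] => i; rewrite inE => /asboolP; apply. Qed.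
Lemma icomp_AS {A M} : icomp A M -> (A \subset AS M).
Proof.
move=> [y [Hy ->]]; apply/fintype.subsetP => i iA; rewrite inE; apply/asboolP => t.
by move=> /connected_component_sub [_ Ht]; exact: Ht.
Qed.
Lemma icomp_sub {A M} : icomp A M -> M `<=` HAs A.
Proof. by move=> [y [_ ->]]; exact: connected_component_sub. Qed.
Lemma icomp_conn {A M} : icomp A M -> connected M.
Proof. by move=> [y [_ ->]]; exact: component_connected. Qed.
Lemma icomp_max {A M K} : icomp A M -> connected K -> K `<=` HAs A ->
  (exists z, K z /\ M z) -> K `<=` M.
Proof.
move=> [y [Hy ->]] Kc KH [z [Kz Mz]].
rewrite (same_connected_component Mz); exact: connected_component_max.
Qed.
Lemma layer_sub {M} : layer M -> M `<=` TT.
Proof. by move=> [A hA] t Mt; exact: (HA_T _ (icomp_sub hA _ Mt)). Qed.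
Lemma layer_ne {M} : layer M -> exists y, M y.
Proof. by move=> [A [y [Hy ->]]]; exists y; exact: connected_component_refl. Qed.
Lemma layer_compE {N y} : layer N -> N y -> N = comp (AS N) y.
Proof.
move=> hN Ny; have NT := layer_sub hN; case: hN => A hA.
apply/seteqP; split.
- apply: connected_component_max => //; [exact: sub_HA_AS | exact: icomp_conn hA].
- apply: (icomp_max hA); first exact: component_connected.
    apply: subset_trans; first exact: connected_component_sub.
    exact: HA_anti (icomp_AS hA).
  by exists y; split => //; apply: connected_component_refl; exact: sub_HA_AS.
Qed.
Lemma layer_icomp {N y} : layer N -> N y -> icomp (AS N) N.
Proof.
move=> hN Ny; exists y; split; last exact: layer_compE.
exact: (sub_HA_AS (layer_sub hN) _ Ny).
Qed.
Lemma icomp_compE {A N y} : icomp A N -> N y -> N = comp A y.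
Proof. by move=> [z [Hz ->]] Ny; exact: same_connected_component. Qed.
Lemma AS_anti {S S' : U} : S `<=` S' -> AS S' \subset AS S.
Proof.
move=> SS; apply/fintype.subsetP => i; rewrite !inE => /asboolP H; apply/asboolP => t St.
exact: H (SS _ St).
Qed.
Lemma layer_eq {L M} : layer L -> layer M -> M `<=` L -> AS L = AS M -> L = M.
Proof.
move=> hL hM ML E; have [y My] := layer_ne hM.
by rewrite (layer_compE hL (ML y My)) (layer_compE hM My) E.
Qed.

Definition sgn (B : {set 'I_m}) : int := (-1) ^+ #|B|.
Definition fmu (L M : U) : int :=
  if `[< M `<=` L >] then
    \sum_(B : {set 'I_m} | (B \subset AS M :\: AS L) && `[< icomp (B :|: AS L) M >]) sgn B
  else 0.

Lemma fmu_refl L : layer L -> fmu L L = 1.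
Proof.
move=> hL; have [y Ly] := layer_ne hL.
rewrite /fmu asboolT // (big_pred1 finset.set0); first by rewrite /sgn finset.cards0 expr0.
move=> B /=; rewrite finset.setDv finset.subset0.
apply/andP/eqP => [[/eqP //]|->]; split => //; apply/asboolP.
rewrite finset.set0U; exact: layer_icomp hL Ly.
Qed.

Lemma fmu_nle L M : ~ (M `<=` L) -> fmu L M = 0.
Proof. by move=> h; rewrite /fmu asboolF. Qed.

Section Main.
Variables (L M : U) (m0 : Amb R n Gt).
Hypotheses (hL : layer L) (hM : layer M) (ML : M `<=` L) (Mm0 : M m0).
Let D := AS M :\: AS L.
Let K B := comp (B :|: AS L) m0.
Let I := [set N : U | layer N /\ N `<=` L /\ M `<=` N].

Lemma k1 (B : {set 'I_m}) : B \subset D -> HAs (B :|: AS L) m0.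
Proof.
move=> BD; have H := sub_HA_AS (layer_sub hM) _ Mm0; apply: (HA_anti _ _ H).
rewrite finset.subUset (AS_anti ML) andbT.
apply: fintype.subset_trans BD _; exact: finset.subsetDl.
Qed.

Lemma k2 (B : {set 'I_m}) : B \subset D -> layer (K B).
Proof. by move=> BD; exists (B :|: AS L); exists m0; split => //; exact: k1. Qed.

Lemma k3 (B : {set 'I_m}) : B \subset D -> K B m0.
Proof. by move=> BD; apply: connected_component_refl; exact: k1. Qed.

Lemma kI (B : {set 'I_m}) : B \subset D -> I (K B).
Proof.
move=> BD; split; first exact: k2.
split.
  case: hL => A' hA'; apply: (icomp_max hA'); first exact: component_connected.
    apply: subset_trans; first exact: connected_component_sub.
    apply: HA_anti; apply: fintype.subset_trans (icomp_AS hA') _.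
    exact: finset.subsetUr.
  by exists m0; split; [exact: k3|exact: ML].
apply: connected_component_max => //.
- apply: subset_trans (HA_anti _); first exact: sub_HA_AS (layer_sub hM).
  rewrite finset.subUset (AS_anti ML) andbT.
  apply: fintype.subset_trans BD _; exact: finset.subsetDl.
- by case: hM => A hA; exact: icomp_conn hA.
Qed.


Definition Aset : {set {set 'I_m}} :=
  [set A | (AS (comp A m0) == A) && `[< I (comp A m0) >]]%SET.

Lemma K_AS (B : {set 'I_m}) : B \subset D -> comp (AS (K B)) m0 = K B.
Proof. by move=> BD; rewrite -(layer_compE (k2 _ BD) (k3 _ BD)). Qed.

Lemma pB_in (B : {set 'I_m}) : B \subset D -> AS (K B) \in Aset.
Proof. by move=> BD; rewrite inE K_AS // eqxx /=; apply/asboolP; exact: kI. Qed.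

Lemma I_img : I = (fun A => comp A m0) @` [set A | A \in Aset].
Proof.
apply/seteqP; split.
- move=> N IN; exists (AS N).
    have Nm0 : N m0 by case: IN => _ [_]; apply.
    rewrite /= inE -(layer_compE (IN.1) Nm0) eqxx /=; exact/asboolP.
  by case: IN => lN [_ MN]; rewrite -layer_compE //; exact: MN.
- move=> _ [A hA <-]; move: hA; rewrite /= inE => /andP[_ /asboolP h]; exact: h.
Qed.

Lemma img_inj : set_inj [set A | A \in Aset] (fun A => comp A m0).
Proof.
move=> A1 A2 /set_mem h1 /set_mem h2 E; have {h1}h1 : A1 \in Aset := h1; have {h2}h2 : A2 \in Aset := h2.
move: h1 h2; rewrite !inE => /andP[/eqP e1 _] /andP[/eqP e2 _].
by rewrite -e1 -e2 E.
Qed.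

Lemma equivB (A B : {set 'I_m}) : A \in Aset ->
  ((B \subset AS (comp A m0) :\: AS L) && `[< icomp (B :|: AS L) (comp A m0) >])
  = ((B \subset D) && (AS (K B) == A)).
Proof.
rewrite inE => /andP[/eqP eA /asboolP [lN [NL MN]]].
have Nm0 : comp A m0 m0 := MN _ Mm0.
apply/andP/andP.
- move=> [BN /asboolP hc].
  have BD : B \subset D.
    apply: fintype.subset_trans BN _; apply: finset.setSD; exact: AS_anti MN.
  split => //; rewrite /K -(icomp_compE hc Nm0); exact/eqP.
- move=> [BD /eqP e].
  have KN : K B = comp A m0 by rewrite -(K_AS _ BD) e.
  have hc : icomp (B :|: AS L) (comp A m0).
    by rewrite -KN; exists m0; split => //; exact: k1.
  split; last exact/asboolP.
  apply/fintype.subsetP => i iB.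
  have := fintype.subsetP BD i iB; rewrite !finset.in_setD => /andP[niL _].
  rewrite niL /=; apply: (fintype.subsetP (icomp_AS hc)).
  by rewrite finset.in_setU iB.
Qed.

Lemma total : L <> M -> \sum_(N \in I) fmu L N = 0.
Proof.
move=> LM.
rewrite I_img fsbig_image; last exact: img_inj.
rewrite fsbig_fin.
transitivity (\sum_(A in Aset) \sum_(B : {set 'I_m} | (B \subset D) && (AS (K B) == A)) sgn B).
  apply: eq_bigr => A hA; rewrite /fmu asboolT; last first.
    by move: hA; rewrite inE => /andP[_ /asboolP [_ []]].
  by apply: eq_bigl => B; exact: equivB.
rewrite -(partition_big (fun B => AS (K B)) (fun A => A \in Aset)); last exact: pB_in.
have [d dD] : exists d, d \in D.
  apply: contrapT => H; apply: LM; apply: (layer_eq hL hM ML).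
  apply/eqP; rewrite finset.eqEsubset (AS_anti ML) /=.
  apply/fintype.subsetP => i iM; apply/negPn/negP => iL; apply: H; exists i.
  by rewrite finset.in_setD iL iM.
exact: alt_sum dD.
Qed.

Lemma fmu_rec : L <> M -> fmu L M =
  - \sum_(N \in [set N | layer N /\ @rev_incl _ L N /\ @rev_incl _ N M /\ N <> M]) fmu L N.
Proof.
move=> LM.
have IM : I M by split => //; split.
have fin : finite_set I by rewrite I_img; apply: finite_image; exact: finite_finset.
have := total LM; rewrite (fsbigD1 M) //.
have -> : I `\ M = [set N | layer N /\ @rev_incl _ L N /\ @rev_incl _ N M /\ N <> M].
  apply/seteqP; split => N /=; rewrite /rev_incl.
    by move=> [[? [? ?]] ?]; do !split => //.
  by move=> [? [? [? ?]]]; do !split => //.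
by move/eqP; rewrite addr_eq0 => /eqP.
Qed.

End Main.

Lemma fmu_mob : is_mobius _ layer (@rev_incl _) fmu.
Proof.
split.
- exact: fmu_refl.
- move=> L M hL hM LM ne; have [y My] := layer_ne hM.
  exact: (fmu_rec _ _ _ hL hM LM My ne).
- by move=> L M _ _ h; exact: fmu_nle.
Qed.

Lemma mob_uniq mu1 mu2 : is_mobius _ layer (@rev_incl _) mu1 ->
  is_mobius _ layer (@rev_incl _) mu2 ->
  forall L M, layer L -> layer M -> mu1 L M = mu2 L M.
Proof.
move=> [r1 s1 z1] [r2 s2 z2] L M hL.
have [k] := ubnP #|AS M|; elim: k M => // k IH M ltk hM.
have [LM|LM] := pselect (rev_incl _ L M); last by rewrite z1 ?z2.
have [e|ne] := pselect (L = M); first by rewrite -e r1 ?r2.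
rewrite s1 ?s2 //; congr (- _); apply: eq_fsbigr => N /set_mem [lN [LN [NM NneM]]].
apply: IH (lN); apply: leq_trans (ltnSE ltk); apply: proper_card.
rewrite finset.properEneq (AS_anti NM) andbT; apply/eqP => E.
by apply: NneM; apply: (layer_eq lN hM NM E).
Qed.

End Comb.

Theorem lemma5p5 (R : realType) (n : nat) (Gt : finZmodType) (m : nat)
  (X : 'I_m -> 'rV[int]_n) :
  (forall i, X i != 0) ->
  finite_index n m X ->
  forall C : set (Amb R n Gt), is_layer R n Gt m X C ->
  forall x, C x ->
  mobius _ (is_layer R n Gt m X) (@rev_incl _)
         (connected_component (Tset R n Gt) x) C
  = \sum_(A : {set 'I_m} | `[< is_comp_of R n Gt m X A C >]) (-1) ^+ #|A|.
Proof.
move=> Xne _ C hC x Cx.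
set TC := connected_component (Tset R n Gt) x.
have CT := @layer_sub R n Gt m X C hC.
have Tx : Tset R n Gt x := CT x Cx.
have hT : is_layer R n Gt m X TC.
  exists finset.set0; exists x; split; first by split => // i; rewrite finset.in_set0.
  rewrite /TC; congr connected_component; apply/seteqP; split => t.
    by move=> Tt; split => // i; rewrite finset.in_set0.
  by case.
have Cc : connected C by case: (hC) => A hA; exact: (@icomp_conn R n Gt m X _ _ hA).
have CTC : C `<=` TC by apply: connected_component_max.
have ASTC : @AS R n Gt m X TC = finset.set0.
  apply/eqP; rewrite -finset.subset0; apply/fintype.subsetP => i.
  rewrite inE => /asboolP H.
  have [t [Tt tne]] := @nonconst R n Gt x (X i) Tx (Xne i).
  by move: tne; rewrite H ?eqxx.
have hx := @xgetI _ (fun _ _ => 0)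
  [set mu | is_mobius _ (is_layer R n Gt m X) (@rev_incl _) mu] _ (@fmu_mob R n Gt m X).
rewrite /mobius (@mob_uniq R n Gt m X _ _ hx (@fmu_mob R n Gt m X) _ _ hT hC).
rewrite /fmu asboolT // ASTC finset.setD0.
apply: eq_bigl => B; rewrite finset.setU0.
apply/andP/idP => [[_ //]|h]; split => //.
by apply: (@icomp_AS R n Gt m X); exact/asboolP.
Qed.
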